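(* Let $\mathscr{a}\in\mathbb{R}$, $\mathscr{b}\in(\mathscr{a},\infty)$, $\rho\in(0,\infty)$, $\alpha,\beta\in\mathbb{R}$, for $\theta=(\theta_1,\theta_2,\theta_3,\theta_4)\in\mathbb{R}^4$ and $x\in\mathbb{R}$ let $\mathscr{N}^\theta(x)=\theta_3\max\{\theta_1x+\theta_2,0\}+\theta_4$ and $\mathcal{L}(\theta)=\rho\int_{\mathscr{a}}^{\mathscr{b}}(\mathscr{N}^\theta(y)-(\alpha y+\beta))^2\,\mathrm{d}y$, and let $\theta\in\mathbb{R}^4$ satisfy $\mathcal{L}(\theta)<\frac{\rho\alpha^2(\mathscr{b}-\mathscr{a})^3}{12}$. Then $\alpha\theta_1\theta_3>0$. *)

(* Defs.v *)
From Stdlib Require Import Reals.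
From Coquelicot Require Import Coquelicot.
Open Scope R_scope.

Definition Nnet (t1 t2 t3 t4 x : R) : R :=
  t3 * Rmax (t1 * x + t2) 0 + t4.

Definition Loss (a b rho alpha beta t1 t2 t3 t4 : R) : R :=
  rho * RInt (fun y => (Nnet t1 t2 t3 t4 y - (alpha * y + beta)) ^ 2) a b.

(* Main.v *)
Require Import Defs.
From Stdlib Require Import Reals Lra Psatz.
From Coquelicot Require Import Coquelicot.
Open Scope R_scope.
Lemma cont_int (a b t1 t2 t3 t4 alpha beta x : R) :
  continuous (fun y => (Nnet t1 t2 t3 t4 y - (alpha * y + beta)) ^ 2) x.
Proof.
  apply continuous_ext with (f := fun y => (t3 * ((t1*y+t2 + Rabs (t1*y+t2))/2) + t4 - (alpha*y+beta)) * ((t3 * ((t1*y+t2 + Rabs (t1*y+t2))/2) + t4 - (alpha*y+beta)) * 1)).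
  { intros y. assert (H : Rmax (t1*y+t2) 0 = (t1*y+t2+Rabs(t1*y+t2))/2) by
     (unfold Rmax, Rabs; destruct (Rle_dec _ _), (Rcase_abs _); lra).
    unfold Nnet. rewrite H. simpl. ring. }
  assert (Hu : continuous (fun y => t1*y+t2) x).
  { apply (continuous_plus (fun y => t1*y) (fun _ => t2)).
    apply (continuous_mult (fun _ => t1) (fun y => y)). apply continuous_const. apply continuous_id. apply continuous_const. }
  assert (Hm : continuous (fun y => (t3 * ((t1*y+t2 + Rabs (t1*y+t2))/2) + t4 - (alpha*y+beta))) x).
  { apply (continuous_minus (fun y => t3 * ((t1*y+t2 + Rabs (t1*y+t2))/2) + t4) (fun y => alpha*y+beta)).
    apply (continuous_plus (fun y => t3 * ((t1*y+t2 + Rabs (t1*y+t2))/2)) (fun _ => t4)).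
    apply (continuous_mult (fun _ => t3) (fun y => ((t1*y+t2 + Rabs (t1*y+t2))/2))). apply continuous_const.
    apply (continuous_mult (fun y => (t1*y+t2 + Rabs (t1*y+t2))) (fun _ => /2)).
    apply (continuous_plus (fun y => t1*y+t2) (fun y => Rabs (t1*y+t2))). exact Hu.
    apply continuous_Rabs_comp. exact Hu. apply continuous_const. apply continuous_const.
    apply (continuous_plus (fun y => alpha*y) (fun _ => beta)).
    apply (continuous_mult (fun _ => alpha) (fun y => y)). apply continuous_const. apply continuous_id. apply continuous_const. }
  apply (continuous_mult _ (fun y => _ * 1)). exact Hm.
  apply (continuous_mult _ (fun _ => 1)). exact Hm. apply continuous_const.
Qed.

Lemma pt (t1 t2 t3 t4 alpha beta m y : R) (H : alpha * t1 * t3 <= 0) :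
  (alpha*(y-m))^2 - 2 * (Nnet t1 t2 t3 t4 m - (alpha*m+beta)) * (alpha*(y-m))
  <= (Nnet t1 t2 t3 t4 y - (alpha * y + beta)) ^ 2.
Proof.
  set (Mx := Rmax (t1*y+t2) 0 - Rmax (t1*m+t2) 0).
  assert (HM : Mx * (t1*(y-m)) >= 0).
  { replace (t1*(y-m)) with ((t1*y+t2)-(t1*m+t2)) by ring. unfold Mx, Rmax. destruct (Rle_dec _ _), (Rle_dec _ _). all: try nra. all: apply Rle_ge, Rle_0_sqr. }
  assert (HD : alpha * t3 * Mx * (y-m) <= 0).
  { destruct (Req_dec t1 0) as [E|E].
    - unfold Mx. subst t1. rewrite !Rmult_0_l. lra.
    - assert (P : t1*t1 > 0) by nra.
      assert (Q : alpha * t3 * Mx * (y-m) * (t1*t1) <= 0).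
      { replace (alpha * t3 * Mx * (y-m) * (t1*t1)) with ((alpha*t1*t3) * (Mx*(t1*(y-m)))) by ring. nra. }
      nra. }
  assert (E : Nnet t1 t2 t3 t4 y = Nnet t1 t2 t3 t4 m + t3 * Mx).
  { unfold Nnet, Mx. ring. }
  rewrite E.
  set (N0 := Nnet t1 t2 t3 t4 m).
  assert (S : 0 <= (N0 - (alpha*m+beta) + t3*Mx)^2) by apply pow2_ge_0.
  assert (Id : (N0 + t3 * Mx - (alpha * y + beta)) ^ 2 =
    (N0 - (alpha*m+beta) + t3*Mx)^2 + (alpha*(y-m))^2 - 2 * (N0 - (alpha*m+beta)) * (alpha*(y-m))
    - 2 * (alpha * t3 * Mx * (y-m))) by ring.
  rewrite Id. lra.
Qed.

Lemma lbint (a b alpha K : R) :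
  RInt (fun y => (alpha*(y-(a+b)/2))^2 - 2 * K * (alpha*(y-(a+b)/2))) a b
  = alpha ^ 2 * (b - a) ^ 3 / 12.
Proof.
  set (m := (a+b)/2).
  assert (Hi : is_RInt (fun y => (alpha*(y-m))^2 - 2 * K * (alpha*(y-m))) a b
     (minus ((fun y => alpha^2*(y-m)^3/3 - K*alpha*(y-m)^2) b)
            ((fun y => alpha^2*(y-m)^3/3 - K*alpha*(y-m)^2) a))).
  { apply (is_RInt_derive (fun y => alpha^2*(y-m)^3/3 - K*alpha*(y-m)^2)).
    - intros x _. auto_derive; auto. field.
    - intros x _. apply (@ex_derive_continuous R_AbsRing R_NormedModule). auto_derive. auto. }
  rewrite (is_RInt_unique _ _ _ _ Hi). unfold minus, plus, opp. simpl. unfold m. field.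
Qed.

Theorem corollary5p6 (a b rho alpha beta t1 t2 t3 t4 : R)
  (hab : a < b) (hrho : 0 < rho)
  (hL : Loss a b rho alpha beta t1 t2 t3 t4 < rho * alpha ^ 2 * (b - a) ^ 3 / 12) :
  alpha * t1 * t3 > 0.
Proof.
  destruct (Rle_or_lt (alpha*t1*t3) 0) as [H|H]; [|lra].
  exfalso.
  set (K := Nnet t1 t2 t3 t4 ((a+b)/2) - (alpha*((a+b)/2)+beta)).
  assert (I : RInt (fun y => (alpha*(y-(a+b)/2))^2 - 2 * K * (alpha*(y-(a+b)/2))) a b
     <= RInt (fun y => (Nnet t1 t2 t3 t4 y - (alpha * y + beta)) ^ 2) a b).
  { apply RInt_le. lra.
    - apply (@ex_RInt_continuous R_CompleteNormedModule). intros z _. apply (@ex_derive_continuous R_AbsRing R_NormedModule). auto_derive. auto.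
    - apply (@ex_RInt_continuous R_CompleteNormedModule). intros z _. apply cont_int; assumption.
    - intros x _. unfold K. apply pt. exact H. }
  rewrite lbint in I. unfold Loss in hL.
  assert (rho * (alpha ^ 2 * (b - a) ^ 3 / 12) <= rho * RInt (fun y => (Nnet t1 t2 t3 t4 y - (alpha * y + beta)) ^ 2) a b)
    by (apply Rmult_le_compat_l; lra).
  lra.
Qed.
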